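(* Let $\pi\in\mathfrak{F}_n$ and $\pi'\in\mathfrak{F}_{n'}$. If the integral ideal $\mathfrak{n}$ satisfies $\gcd(\mathfrak{n},\mathfrak{q}_\pi\mathfrak{q}_{\pi'})=\mathcal{O}_F$, then \[ |\mu_{\pi\times\pi'}(\mathfrak{n})|\le\tfrac12\big(\lambda_{\pi\times\tilde\pi}(\mathfrak{n})+\lambda_{\pi'\times\tilde\pi'}(\mathfrak{n})\big). \]
   Context: $F$ is a number field, $\mathcal{O}_F$ its ring of integers, $\mathfrak{F}_n$ the set of cuspidal automorphic representations of $\mathrm{GL}_n(\mathbb{A}_F)$ with unitary central character, $\mathfrak{q}_\pi$ the arithmetic conductor, $\tilde\pi$ the contragredient. $\lambda_{\pi\times\pi'}(\mathfrak{n})$ is the $\mathfrak{n}$-th Dirichlet coefficient of the Rankin–Selberg $L$-function $L(s,\pi\times\pi')$. For $\mathfrak{n}$ coprime to $\mathfrak{q}_\pi\mathfrak{q}_{\pi'}$, $\mu_{\pi\times\pi'}(\mathfrak{n})$ is multiplicative with $\sum_{k\ge0}\mu_{\pi\times\pi'}(\mathfrak{p}^k)\mathrm{N}\mathfrak{p}^{-ks}=\prod_{j=1}^n\prod_{j'=1}^{n'}(1-\alpha_{j,\pi}(\mathfrak{p})\alpha_{j',\pi'}(\mathfrak{p})\mathrm{N}\mathfrak{p}^{-s})$, where $\alpha_{j,\pi}(\mathfrak{p})$ are the Satake parameters of $\pi$ at $\mathfrak{p}$. *)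

(* Defs.v *)
From HB Require Import structures.
From mathcomp Require Import all_boot all_order all_algebra all_field.
Set Implicit Arguments. Unset Strict Implicit. Unset Printing Implicit Defensive.
Import Order.TTheory GRing.Theory Num.Theory.
Local Open Scope ring_scope.

(* Unramified local data of a cuspidal automorphic representation of GL_n(A_F):
   P is the type of (nonzero) prime ideals of O_F, [ramified p] means p | q_pi,
   and [satake p] lists the Satake parameters alpha_{j,pi}(p), j < n
   (only meaningful when p is unramified). *)
Record autrep (P : eqType) (n : nat) := AutRep {
  ramified : pred P;
  satake : P -> 'I_n -> algC }.

Definition contragredient (P : eqType) n (pi : autrep P n) : autrep P n :=
  AutRep (ramified pi) (fun p j => (satake pi p j)^*).

Definition mu_loc n n' (a : 'I_n -> algC) (b : 'I_n' -> algC) (k : nat) : algC :=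
  (\prod_(ij : 'I_n * 'I_n') (1 - (a ij.1 * b ij.2) *: 'X))`_k.

(* coefficient of X^k in prod_{j,j'} (1 - a_j b_j' X)^{-1}
   = prod_{j,j'} sum_e (a_j b_j')^e X^e : lambda_{pi x pi'}(p^k) at unramified p *)
Definition lambda_loc n n' (a : 'I_n -> algC) (b : 'I_n' -> algC) (k : nat) : algC :=
  \sum_(f : {ffun 'I_n * 'I_n' -> 'I_k.+1} | (\sum_ij (f ij : nat) == k)%N)
     \prod_(ij : 'I_n * 'I_n') (a ij.1 * b ij.2) ^+ f ij.

(* An integral ideal n = prod_{p in s} p^(e p), with s duplicate free. *)
Definition rs_mu (P : eqType) n n' (pi : autrep P n) (pi' : autrep P n')
  (s : seq P) (e : P -> nat) : algC :=
  \prod_(p <- s) mu_loc (satake pi p) (satake pi' p) (e p).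

Definition rs_lambda (P : eqType) n n' (pi : autrep P n) (pi' : autrep P n')
  (s : seq P) (e : P -> nat) : algC :=
  \prod_(p <- s) lambda_loc (satake pi p) (satake pi' p) (e p).

(* Main.v *)
Require Import Defs.
From HB Require Import structures.
From mathcomp Require Import all_boot all_order all_algebra all_field.
From mathcomp Require Import ring.
Import Order.TTheory GRing.Theory Num.Theory.
Local Open Scope ring_scope.

Definition eqK (K : nat) (p q : {poly algC}) := forall j, (j <= K)%N -> p`_j = q`_j.
Definition psi (s z : algC) K : {poly algC} :=
  \poly_(m < K.+1) (if m == 0%N then 0 else s * z ^+ m).
Definition Tp (z : algC) K : {poly algC} := \poly_(e < K.+1) z ^+ e.

Lemma eqK_mull K r p q : eqK K p q -> eqK K (r * p) (r * q).
Proof.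
move=> h j hj; rewrite !coefM; apply: eq_bigr => i _; rewrite h //.
by apply: leq_trans (leq_subr _ _) hj.
Qed.

Lemma eqK_mulr K r p q : eqK K p q -> eqK K (p * r) (q * r).
Proof. by move=> h; rewrite ![_ * r]mulrC; apply: eqK_mull. Qed.

Lemma newton_prod (I : Type) (r : seq I) K (phi ps : I -> {poly algC}) :
  (forall i, eqK K ('X * (phi i)^`()) (ps i * phi i)) ->
  eqK K ('X * (\prod_(i <- r) phi i)^`()) ((\sum_(i <- r) ps i) * \prod_(i <- r) phi i).
Proof.
move=> h; elim: r => [|i r IH].
  by move=> j _; rewrite !big_nil derivC mulr0 mul0r.
move=> j hj; rewrite !big_cons derivM mulrDr coefD.
have e1 := @eqK_mulr K (\prod_(i <- r) phi i) _ _ (h i) j hj.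
have e2 := @eqK_mull K (phi i) _ _ IH j hj.
rewrite mulrA e1 mulrCA e2.
rewrite -coefD; apply: (congr1 (fun q : {poly algC} => q`_j)); ring.
Qed.

Lemma factF K z : eqK K ('X * (1 - z *: 'X)^`()) (psi (-1) z K * (1 - z *: 'X)).
Proof.
move=> j hj; rewrite derivB derivC derivZ derivX sub0r coefXM.
rewrite mulrBr mulr1 coefB -scalerAr coefZ coefMX /psi !coef_poly.
case: j hj => [|j] hj /=; first by rewrite mulr0 subr0.
rewrite !ltnS hj (ltnW hj) coefN alg_polyC coefC.
case: j hj => [|j] hj /=.
  by rewrite mulN1r expr1 mulr0 subr0.
rewrite oppr0 !mulN1r mulrN opprK -exprS; ring.
Qed.

Lemma factG K z : eqK K ('X * (Tp z K)^`()) (psi 1 z K * Tp z K).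
Proof.
move=> j hj; rewrite coefXM coefM /psi /Tp.
case: j hj => [|j] hj /=.
  by rewrite big_ord1 !coef_poly /= mul0r.
rewrite coef_deriv coef_poly ltnS hj big_ord_recl coef_poly /= mul0r add0r.
rewrite (eq_bigr (fun _ => z ^+ j.+1)); last first.
  move=> i _; rewrite !coef_poly /= mul1r.
  have -> : (bump 0 i < K.+1)%N.
    by rewrite /bump /= add1n ltnS; exact: leq_trans (ltn_ord i) hj.
  rewrite ifT; last by apply: leq_trans (leq_subr _ _) _.
  by rewrite -exprD subnKC // /bump /= add1n; exact: ltn_ord i.
by rewrite sumr_const card_ord.
Qed.

Lemma newton_coef K (P Q : {poly algC}) : eqK K ('X * P^`()) (Q * P) ->
  forall j, (j <= K)%N -> P`_j *+ j = \sum_(i < j.+1) Q`_i * P`_(j - i).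
Proof.
move=> h j hj; rewrite -coefM -h // coefXM.
by case: j hj => [|j] _ //=; rewrite coef_deriv.
Qed.
Lemma pair_ineq (t t' x y : algC) : 0 <= t -> 0 <= t' -> 0 <= x -> 0 <= y ->
  (t * t') ^+ 2 <= x * y -> (t * t') *+ 2 <= x + y.
Proof.
move=> ht ht' hx hy h.
have h1 : 0 <= (t * t') *+ 2 by rewrite mulrn_wge0 // mulr_ge0.
have h2 : 0 <= x + y by rewrite addr_ge0.
rewrite -(ler_sqr (x:=(t*t') *+ 2) (y := x + y)) ?nnegrE //.
apply: le_trans (real_leif_AGM2_scaled (ger0_real hx) (ger0_real hy)).1.
rewrite -mulr_natr exprMn (_ : (2%:R : algC) ^+ 2 = 4%:R); last first.
  by rewrite -natrX.
by rewrite mulr_natr ler_wMn2r.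
Qed.

Lemma cs (m : nat) (t a b : 'I_m -> algC) :
  (forall i, 0 <= t i) -> (forall i, 0 <= a i) -> (forall i, 0 <= b i) ->
  (forall i, t i ^+ 2 <= a i * b i) ->
  (\sum_i t i) ^+ 2 <= (\sum_i a i) * (\sum_i b i).
Proof.
move=> ht ha hb h.
rewrite -(ler_pMn2r (n:=2)) //.
have -> : (\sum_i a i) * (\sum_i b i) *+ 2 =
   \sum_i \sum_k (a i * b k + a k * b i).
  rewrite [RHS](eq_bigr (fun i => \sum_k a i * b k + \sum_k a k * b i)); last first.
    by move=> i _; rewrite big_split.
  rewrite big_split /= -big_distrlr mulr2n; congr (_ + _).
  rewrite [RHS](eq_bigr (fun i => (\sum_k a k) * b i)); last first.
    by move=> i _; rewrite mulr_suml.
  by rewrite -mulr_sumr.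
rewrite expr2 big_distrlr /= -sumrMnl; apply: ler_sum => i _.
rewrite -sumrMnl; apply: ler_sum => k _.
apply: pair_ineq; rewrite ?mulr_ge0 //.
rewrite exprMn (_ : a i * b k * (a k * b i) = (a i * b i) * (a k * b k)); last by ring.
by apply: ler_pM; rewrite ?exprn_ge0.
Qed.

Lemma nonneg_rec (h w : nat -> algC) K : h 0%N = 1 -> (forall i, 0 <= w i) ->
  (forall j, (j <= K)%N -> h j *+ j =
     \sum_(i < j.+1) (if i == 0%N :> nat then 0 else w i) * h (j - i)%N) ->
  forall j, (j <= K)%N -> 0 <= h j.
Proof.
move=> h0 hw hrec; elim/ltn_ind => j IH hj.
case: j IH hj => [|j] IH hj; first by rewrite h0 ler01.
rewrite -(pmulrn_lge0 _ (ltn0Sn j)) hrec //; apply: sumr_ge0 => i _.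
case: eqP => [_|/eqP ni]; first by rewrite mul0r.
apply: mulr_ge0 => //; apply: IH; last by apply: leq_trans (leq_subr _ _) hj.
by rewrite ltn_subrL lt0n ni.
Qed.

Lemma main_ineq (c hA hB pa pb : nat -> algC) K :
  c 0%N = 1 -> hA 0%N = 1 -> hB 0%N = 1 ->
  (forall j, (j <= K)%N -> c j *+ j =
     - \sum_(i < j.+1) (if i == 0%N :> nat then 0 else pa i * pb i) * c (j - i)%N) ->
  (forall j, (j <= K)%N -> hA j *+ j =
     \sum_(i < j.+1) (if i == 0%N :> nat then 0 else `|pa i| ^+ 2) * hA (j - i)%N) ->
  (forall j, (j <= K)%N -> hB j *+ j =
     \sum_(i < j.+1) (if i == 0%N :> nat then 0 else `|pb i| ^+ 2) * hB (j - i)%N) ->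
  forall j, (j <= K)%N -> [/\ 0 <= hA j, 0 <= hB j & `|c j| ^+ 2 <= hA j * hB j].
Proof.
move=> c0 hA0 hB0 rc rA rB.
have nA := @nonneg_rec hA (fun i => `|pa i| ^+ 2) K hA0 (fun i => exprn_ge0 2 (normr_ge0 (pa i))) rA.
have nB := @nonneg_rec hB (fun i => `|pb i| ^+ 2) K hB0 (fun i => exprn_ge0 2 (normr_ge0 (pb i))) rB.
elim/ltn_ind => j IH hj; split; [exact: nA|exact: nB|].
case: j IH hj => [|j] IH hj; first by rewrite c0 hA0 hB0 normr1 expr1n mulr1.
set J := j.+1.
have lt i : i != 0%N -> (J - i < J)%N by move=> ni; rewrite ltn_subrL lt0n ni.
have le i : (J - i <= K)%N by apply: leq_trans (leq_subr _ _) hj.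
pose T := fun i : 'I_J.+1 => if i == 0%N :> nat then 0 else `|pa i| * `|pb i| * `|c (J - i)%N|.
pose al := fun i : 'I_J.+1 => if i == 0%N :> nat then 0 else `|pa i| ^+ 2 * hA (J - i)%N.
pose be := fun i : 'I_J.+1 => if i == 0%N :> nat then 0 else `|pb i| ^+ 2 * hB (J - i)%N.
have key : (`|c J| *+ J) ^+ 2 <= (hA J *+ J) * (hB J *+ J).
  rewrite (rA _ hj) (rB _ hj).
  have -> : \sum_(i < J.+1) (if i == 0%N :> nat then 0 else `|pa i| ^+ 2) * hA (J - i)%N
     = \sum_i al i.
    by apply: eq_bigr => i _; rewrite /al; case: eqP => _; rewrite ?mul0r.
  have -> : \sum_(i < J.+1) (if i == 0%N :> nat then 0 else `|pb i| ^+ 2) * hB (J - i)%N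
     = \sum_i be i.
    by apply: eq_bigr => i _; rewrite /be; case: eqP => _; rewrite ?mul0r.
  have gT i : 0 <= T i by rewrite /T; case: eqP => // _; rewrite !mulr_ge0.
  apply: (@le_trans _ _ ((\sum_i T i) ^+ 2)); last apply: cs => //.
  - rewrite ler_sqr ?nnegrE; last by apply: sumr_ge0 => i _. 2: by rewrite mulrn_wge0.
    rewrite -normrMn (rc _ hj) normrN; apply: le_trans (ler_norm_sum _ _ _) _.
    apply: ler_sum => i _; rewrite /T; case: eqP => _; first by rewrite mul0r normr0.
    by rewrite !normrM.
  - by move=> i; rewrite /al; case: eqP => // /eqP ni; rewrite mulr_ge0 ?exprn_ge0 ?nA.
  - by move=> i; rewrite /be; case: eqP => // /eqP ni; rewrite mulr_ge0 ?exprn_ge0 ?nB.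
  - move=> i; rewrite /T /al /be; case: eqP => [_|/eqP ni]; first by rewrite expr0n mul0r.
    have [_ _ H] := IH _ (lt _ ni) (le i).
    rewrite !exprMn (_ : `|pa i| ^+ 2 * hA (J - i)%N * (`|pb i| ^+ 2 * hB (J - i)%N)
       = `|pa i| ^+ 2 * `|pb i| ^+ 2 * (hA (J - i)%N * hB (J - i)%N)); last by ring.
    by rewrite ler_wpM2l // mulr_ge0 // exprn_ge0.
have hJ : (0 : algC) < J%:R ^+ 2 by rewrite exprn_gt0 // ltr0n.
have e1 : (`|c J| *+ J) ^+ 2 = `|c J| ^+ 2 * J%:R ^+ 2.
  by rewrite -(mulr_natr `|c J| J) exprMn.
have e2 : (hA J *+ J) * (hB J *+ J) = hA J * hB J * J%:R ^+ 2.
  by rewrite -(mulr_natr (hA J) J) -(mulr_natr (hB J) J) mulrACA -expr2.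
by rewrite -(ler_pM2r hJ) -e1 -e2.
Qed.

Definition pw n (a : 'I_n -> algC) m := \sum_i a i ^+ m.
Arguments pw {n}.
Definition Gp n n' (a : 'I_n -> algC) (b : 'I_n' -> algC) K :=
  \prod_(ij : 'I_n * 'I_n') Tp (a ij.1 * b ij.2) K.

Arguments Gp {n n'}.

Lemma pw_pair n n' (a : 'I_n -> algC) (b : 'I_n' -> algC) m :
  \sum_(ij : 'I_n * 'I_n') (a ij.1 * b ij.2) ^+ m = pw a m * pw b m.
Proof.
rewrite /pw big_distrlr /= pair_bigA /=.
by apply: eq_bigr => ij _; rewrite exprMn.
Qed.

Lemma coef0_prod (I : Type) (r : seq I) (p : I -> {poly algC}) :
  (\prod_(i <- r) p i)`_0 = \prod_(i <- r) (p i)`_0.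
Proof.
elim: r => [|i r IH]; first by rewrite !big_nil coef1.
by rewrite !big_cons coef0M IH.
Qed.

Lemma mu_newton n n' (a : 'I_n -> algC) (b : 'I_n' -> algC) j :
  mu_loc a b j *+ j = - \sum_(i < j.+1)
     (if i == 0%N :> nat then 0 else pw a i * pw b i) * mu_loc a b (j - i)%N.
Proof.
rewrite /mu_loc.
have := @newton_coef j _ _ (@newton_prod _ (index_enum ('I_n * 'I_n')%type) j
  (fun ij => 1 - (a ij.1 * b ij.2) *: 'X) (fun ij => psi (-1) (a ij.1 * b ij.2) j)
  (fun ij => factF j _)) j (leqnn j).
move=> ->; rewrite -sumrN; apply: eq_bigr => i _.
rewrite coef_sum.
rewrite (eq_bigr (fun ij : 'I_n * 'I_n' =>
   if i == 0%N :> nat then 0 else - (a ij.1 * b ij.2) ^+ i)); last first.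
  by move=> ij _; rewrite /psi coef_poly ltn_ord mulN1r.
case: eqP => _; first by rewrite big1 // !mul0r oppr0.
by rewrite sumrN pw_pair mulNr.
Qed.

Lemma la_newton n (a : 'I_n -> algC) K j : (j <= K)%N ->
  (Gp a (fun k => (a k)^*) K)`_j *+ j = \sum_(i < j.+1)
     (if i == 0%N :> nat then 0 else `|pw a i| ^+ 2) * (Gp a (fun k => (a k)^*) K)`_(j - i)%N.
Proof.
move=> hj; rewrite /Gp.
rewrite (@newton_coef K _ _ (@newton_prod _ (index_enum ('I_n * 'I_n)%type) K
  (fun ij => Tp (a ij.1 * (a ij.2)^*) K) (fun ij => psi 1 (a ij.1 * (a ij.2)^*) K)
  (fun ij => factG K _)) j hj).
apply: eq_bigr => i _; rewrite coef_sum.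
rewrite (eq_bigr (fun ij : 'I_n * 'I_n =>
   if i == 0%N :> nat then 0 else (a ij.1 * (a ij.2)^*) ^+ i)); last first.
  move=> ij _; rewrite /psi coef_poly mul1r ifT //.
  by apply: leq_trans (ltn_ord i) _; rewrite ltnS.
case: eqP => _; first by rewrite big1 // !mul0r.
rewrite (@pw_pair n n a (fun k => (a k)^*)) normCK; congr (_ * _ * _).
by rewrite /pw rmorph_sum; apply: eq_bigr => k _; rewrite rmorphXn.
Qed.

Lemma lambda_Gp n n' (a : 'I_n -> algC) (b : 'I_n' -> algC) k :
  lambda_loc a b k = (Gp a b k)`_k.
Proof.
rewrite /Gp /Tp /lambda_loc.
rewrite [RHS](_ : _ = (\prod_(ij : 'I_n * 'I_n')
   \sum_(e < k.+1) (a ij.1 * b ij.2) ^+ e *: 'X^e)`_k); last first.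
  by apply: (congr1 (fun q : {poly algC} => q`_k)); apply: eq_bigr => ij _; rewrite poly_def.
rewrite bigA_distr_bigA coef_sum big_mkcond /=; apply: eq_bigr => f _.
rewrite (eq_bigr (fun ij => ((a ij.1 * b ij.2) ^+ f ij)%:P * 'X^(f ij))); last first.
  by move=> ij _; rewrite mul_polyC.
rewrite big_split /= prodrXr -rmorph_prod coefCM coefXn eq_sym.
by case: eqP; rewrite ?mulr1 ?mulr0.
Qed.

Lemma local_bound n n' (a : 'I_n -> algC) (b : 'I_n' -> algC) k :
  [/\ 0 <= lambda_loc a (fun j => (a j)^*) k, 0 <= lambda_loc b (fun j => (b j)^*) k &
   `|mu_loc a b k| ^+ 2 <= lambda_loc a (fun j => (a j)^*) k * lambda_loc b (fun j => (b j)^*) k].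
Proof.
rewrite !lambda_Gp.
have T0 z K : (Tp z K)`_0 = 1 by rewrite /Tp coef_poly /= expr0.
apply: (@main_ineq (mu_loc a b) (fun j => (Gp a (fun j => (a j)^*) k)`_j)
   (fun j => (Gp b (fun j => (b j)^*) k)`_j) (pw a) (pw b) k) => //.
- rewrite /mu_loc coef0_prod big1 // => ij _.
  by rewrite coefB coef1 coefZ coefX mulr0 subr0.
- by rewrite /Gp coef0_prod big1.
- by rewrite /Gp coef0_prod big1.
- by move=> j _; apply: mu_newton.
- by move=> j hj; apply: la_newton.
- by move=> j hj; apply: la_newton.
Qed.

Arguments local_bound {n n'}.

Theorem lemma3p2 (P : eqType) (n n' : nat) (pi1 : autrep P n) (pi2 : autrep P n')
  (s : seq P) (e : P -> nat) :
  (0 < n)%N -> (0 < n')%N -> uniq s ->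
  (forall p, p \in s -> (0 < e p)%N -> ~~ ramified pi1 p /\ ~~ ramified pi2 p) ->
  `|rs_mu pi1 pi2 s e| <=
    (rs_lambda pi1 (contragredient pi1) s e + rs_lambda pi2 (contragredient pi2) s e) / 2%:R.
Proof.
move=> _ _ _ _.
rewrite /rs_mu /rs_lambda /contragredient /=.
set M := \prod_(p <- s) mu_loc _ _ _.
set A := \prod_(p <- s) lambda_loc (satake pi1 p) _ (e p).
set B := \prod_(p <- s) lambda_loc (satake pi2 p) _ (e p).
have hA : 0 <= A.
  by apply: prodr_ge0 => p _; have [] := local_bound (satake pi1 p) (satake pi2 p) (e p).
have hB : 0 <= B.
  by apply: prodr_ge0 => p _; have [] := local_bound (satake pi1 p) (satake pi2 p) (e p).
have h2 : `|M| ^+ 2 <= A * B.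
  rewrite /M normr_prod -prodrXl /A /B -big_split /=; apply: ler_prod => p _.
  have [_ _ H] := local_bound (satake pi1 p) (satake pi2 p) (e p).
  by rewrite exprn_ge0 ?H.
rewrite -ler_sqr ?nnegrE ?divr_ge0 ?addr_ge0 //.
exact: le_trans h2 (real_leif_AGM2 (ger0_real hA) (ger0_real hB)).1.
Qed.
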